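(* Let $A_X,A_Z,B_X,B_Z\subseteq\mathbb{F}_q^n$ be linear codes with $A_X^\perp\subseteq A_Z$ and $B_X^\perp\subseteq B_Z$ (so that $\mathrm{CSS}(A_X,A_Z)$ and $\mathrm{CSS}(B_X,B_Z)$ are CSS codes). Define \[ C_X=(A_X\cap B_X)+B_Z^\perp,\qquad C_Z=(A_Z\cap B_Z)+B_X^\perp . \] Then \[ C_X^\perp=(A_X^\perp\cap B_Z)+B_X^\perp,\qquad C_Z^\perp=(A_Z^\perp\cap B_X)+B_Z^\perp, \] and $C_X^\perp\subseteq C_Z$, so that $\mathrm{CSS}(C_X,C_Z)$ is a well-defined CSS code.
   Context: $q$ is a prime power. For $C\subseteq\mathbb{F}_q^n$ linear, $C^\perp=\{y\in\mathbb{F}_q^n: \sum_i y_ic_i=0\ \forall c\in C\}$. For linear codes $C_X,C_Z$ with $C_X^\perp\subseteq C_Z$, $\mathrm{CSS}(C_X,C_Z)=\mathrm{span}\{\sum_{y\in C_X^\perp}|x+y\rangle: x\in C_Z\}\subseteq(\mathbb{C}^q)^{\otimes n}$. *)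

(* Defs.v *)
(* Linear codes in F_q^n are subspaces ({vspace 'rV[F]_n})
   of the row space 'rV[F]_n over a finite field F (q = #|F|). *)
From HB Require Import structures.
From mathcomp Require Import all_boot all_order all_algebra.
Set Implicit Arguments. Unset Strict Implicit. Unset Printing Implicit Defensive.
Import GRing.Theory.
Local Open Scope ring_scope.

Definition dotv (F : finFieldType) (n : nat) (y c : 'rV[F]_n) : F :=
  \sum_(i < n) y ord0 i * c ord0 i.

(* C^perp = { y | forall c in C, sum_i y_i c_i = 0 }, as a subspace
   (the span of this set, which is the set itself). *)
Definition dual (F : finFieldType) (n : nat) (C : {vspace 'rV[F]_n})
  : {vspace 'rV[F]_n} :=
  <<enum [set y : 'rV[F]_n | [forall c : 'rV[F]_n, (c \in C) ==> (dotv y c == 0%R)]]>>%VS.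

(* Main.v *)
Require Import Defs.
From mathcomp Require Import all_boot all_order all_algebra.
Set Implicit Arguments. Unset Strict Implicit. Unset Printing Implicit Defensive.
Import GRing.Theory.
Local Open Scope ring_scope.

Section Aux.
Variables (F : finFieldType) (n : nat).
Implicit Types U V W : {vspace 'rV[F]_n}.

Lemma dotvE (y c : 'rV[F]_n) : dotv y c = (y *m c^T) 0 0.
Proof. rewrite /dotv [in RHS]mxE; apply: eq_bigr => k _; by rewrite !mxE. Qed.

Lemma orth_mx m (K : 'M[F]_(m, n)) (y : 'rV[F]_n) :
  (forall c, (c <= K)%MS -> dotv y c = 0) <-> y *m K^T = 0.
Proof.
split=> [H|H c /submxP [D ->]].
  apply/rowP=> j; rewrite [RHS]mxE -(H (row j K) (row_sub _ _)) dotvE [in RHS]mxE mxE.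
  by apply: eq_bigr => k _; rewrite !mxE.
by rewrite dotvE trmx_mul mulmxA H mul0mx mxE.
Qed.

Definition elts := enum {: 'rV[F]_n}.
Definition Mof U : 'M[F]_(size elts, n) :=
  \matrix_(i < size elts) (if nth 0 elts i \in U then nth 0 elts i else 0).

Lemma memM U y : (y \in U) = (y <= Mof U)%MS.
Proof.
apply/idP/idP => [Hy|].
  have Hi : (index y elts < size elts)%N by rewrite index_mem mem_enum.
  have -> : y = row (Ordinal Hi) (Mof U).
    by rewrite rowK /= nth_index ?mem_enum // Hy.
  exact: row_sub.
case/submxP => D ->; rewrite mulmx_sum_row; apply: memv_suml => i _.
apply: memvZ; rewrite rowK; case: ifP => // _; exact: mem0v.
Qed.

Lemma mem_dual U y :
  (y \in dual U) <-> (forall c, c \in U -> dotv y c = 0).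
Proof.
pose S := [set y : 'rV[F]_n | [forall c : 'rV[F]_n, (c \in U) ==> (dotv y c == 0%R)]].
split => [Hy|H]; last first.
  rewrite /dual; apply: memv_span; rewrite mem_enum inE.
  by apply/forallP => c; apply/implyP => Hc; rewrite H.
suff : y *m (Mof U)^T = 0.
  by move/orth_mx => H c Hc; apply: H; rewrite -memM.
have := coord_span (X := in_tuple (enum S)) Hy => ->.
rewrite mulmx_suml big1 // => i _; rewrite -scalemxAl.
have : (in_tuple (enum S))`_i \in S.
  by rewrite -mem_enum; apply: mem_nth; exact: ltn_ord.
rewrite inE => /forallP HX.
suff -> : (in_tuple (enum S))`_i *m (Mof U)^T = 0 by rewrite scaler0.
apply/orth_mx => c; rewrite -memM => Hc.
by have /implyP/(_ Hc)/eqP := HX c.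
Qed.

Arguments mem_dual {U y}.

Lemma mem_dual_mx U y : (y \in dual U) = (y <= kermx (Mof U)^T)%MS.
Proof.
apply/idP/idP => [/mem_dual H|/sub_kermxP H].
  apply/sub_kermxP/orth_mx => c; rewrite -memM; exact: H.
by apply/mem_dual => c; rewrite memM; move: c; apply/orth_mx.
Qed.

Lemma kerker m (A : 'M[F]_(m, n)) : (kermx (kermx A^T)^T == A)%MS.
Proof.
set K := kermx A^T.
have sub : (A <= kermx K^T)%MS.
  by apply/sub_kermxP; have := congr1 trmx (mulmx_ker A^T); rewrite trmx_mul trmxK trmx0.
apply/andP; split => //; rewrite -(mxrank_leqif_sup sub).2.
rewrite mxrank_ker mxrank_tr mxrank_ker mxrank_tr.
by rewrite subKn ?rank_leq_col.
Qed.

Lemma dualK U : dual (dual U) = U.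
Proof.
apply/vspaceP => y; rewrite [RHS]memM.
apply/idP/idP => [/mem_dual H|Hy].
  have : y *m (kermx (Mof U)^T)^T = 0.
    by apply/orth_mx => c Hc; apply: H; rewrite mem_dual_mx.
  move/sub_kermxP; move/eqmxP: (kerker (Mof U)) => E.
  by rewrite E.
apply/mem_dual => c; rewrite mem_dual_mx => /sub_kermxP Hc.
move/submxP: Hy => [D ->].
have E : Mof U *m c^T = 0 by rewrite -(trmxK (Mof U)) -trmx_mul Hc trmx0.
by rewrite dotvE -mulmxA E mulmx0 mxE.
Qed.

Lemma dualS U V : (U <= V)%VS -> (dual V <= dual U)%VS.
Proof.
move/subvP => H; apply/subvP => y /mem_dual Hy; apply/mem_dual => c Hc.
exact/Hy/H.
Qed.

Lemma dual_add U V : dual (U + V) = (dual U :&: dual V)%VS.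
Proof.
apply/vspaceP => y; rewrite memv_cap; apply/idP/andP.
  move=> Hy; split; apply: (subvP (dualS _)) Hy; [exact: addvSl | exact: addvSr].
case=> /mem_dual Hu /mem_dual Hv; apply/mem_dual => c /memv_addP [u Hu' [v Hv' ->]].
by rewrite !dotvE linearD /= mulmxDr mxE -!dotvE Hu // Hv // addr0.
Qed.

Lemma dual_cap U V : dual (U :&: V) = (dual U + dual V)%VS.
Proof.
by rewrite -{1}(dualK U) -{1}(dualK V) -dual_add dualK.
Qed.

Lemma modular U V W : (V <= W)%VS -> ((U + V) :&: W = (U :&: W) + V)%VS.
Proof.
move=> VW; apply/eqP; rewrite eqEsubv; apply/andP; split; last first.
  rewrite subv_cap; apply/andP; split; first exact: addvS (capvSl U W) (subvv V).
  by rewrite subv_add VW capvSr.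
apply/subvP => x /memv_capP [/memv_addP [u Hu [v Hv ->]] Hw].
apply: memv_add => //; rewrite memv_cap Hu /=.
have -> : u = (u + v) - v by rewrite addrK.
by rewrite memvB // (subvP VW).
Qed.

End Aux.

Theorem lemma5p4 (F : finFieldType) (n : nat)
  (AX AZ BX BZ : {vspace 'rV[F]_n})
  (hA : (dual AX <= AZ)%VS) (hB : (dual BX <= BZ)%VS) :
  let CX := ((AX :&: BX) + dual BZ)%VS in
  let CZ := ((AZ :&: BZ) + dual BX)%VS in
  dual CX = ((dual AX :&: BZ) + dual BX)%VS /\
  dual CZ = ((dual AZ :&: BX) + dual BZ)%VS /\
  (dual CX <= CZ)%VS.
Proof.
move=> CX CZ.
have e1 : dual CX = ((dual AX :&: BZ) + dual BX)%VS.
  by rewrite /CX dual_add dualK dual_cap modular.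
split => //; split.
  rewrite /CZ dual_add dualK dual_cap modular //.
  by rewrite -(dualK BX); apply: dualS.
rewrite e1 /CZ; apply: addvS => //; apply: capvS => //.
Qed.
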